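(* Let $X\in\mathbb{R}^{n\times p}$ have rank $p$, let $P\in\mathbb{R}^{n\times n}$ be symmetric, let $S_K(P)$ be the subspace spanned by the eigenvectors of $P$ associated with its $K$ largest eigenvalues, and let $\mathcal{R}=\mathrm{col}(X)\cap S_K(P)$. Suppose $(\beta,\theta,\alpha)$ and $(\beta',\theta',\alpha')$, with $\beta,\theta,\beta',\theta'\in\mathbb{R}^p$ and $\alpha,\alpha'\in\mathbb{R}^n$, both satisfy $$X\beta+X\theta+\alpha = X\beta'+X\theta'+\alpha' \;(=\mathbb{E}Y)$$ and both satisfy the constraints $X\theta\in\mathcal{R}$, $X\beta\perp\mathcal{R}$, $\alpha\in S_K(P)$, $\alpha\perp\mathcal{R}$ (respectively with primes). Then $\beta=\beta'$, $\theta=\theta'$ and $\alpha=\alpha'$.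
   Context: This is the identifiability statement for the regression model with network effects $\mathbb{E}Y = X\beta+X\theta+\alpha$ subject to the stated constraints; $\mathrm{col}(X)$ denotes the column space of $X$. *)

(* Defs.v *)
From HB Require Import structures.
From mathcomp Require Import all_boot all_order all_algebra.
From mathcomp Require Import reals.
Set Implicit Arguments. Unset Strict Implicit. Unset Printing Implicit Defensive.
Import Order.TTheory GRing.Theory Num.Theory.
Local Open Scope ring_scope.

Section Defs.
Variable R : realType.

Definition dotv (n : nat) (u v : 'cV[R]_n) : R := (u^T *m v) 0 0.

Definition in_col (n p : nat) (X : 'M[R]_(n, p)) (v : 'cV[R]_n) : Prop :=
  exists b : 'cV[R]_p, v = X *m b.

(* (U, d) is an ordered spectral decomposition of P:
   U orthogonal, P = U diag(d) U^T, eigenvalues d sorted non-increasingly,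
   so column j of U is an eigenvector of P for the eigenvalue d_j, the
   j-th largest eigenvalue (counted with multiplicity). *)
Definition ordered_spectral_decomp (n : nat) (P U : 'M[R]_n) (d : 'rV[R]_n) : Prop :=
  [/\ U^T *m U = 1%:M,
      P = U *m diag_mx d *m U^T &
      forall i j : 'I_n, (i <= j)%N -> d 0 j <= d 0 i].

(* S_K(P): span of the eigenvectors (columns of U) associated with the K
   largest eigenvalues, i.e. the first K columns of U. *)
Definition in_SK (n K : nat) (U : 'M[R]_n) (v : 'cV[R]_n) : Prop :=
  exists c : 'cV[R]_n, (forall j : 'I_n, (K <= j)%N -> c j 0 = 0) /\ v = U *m c.

Definition in_Rsp (n p K : nat) (X : 'M[R]_(n, p)) (U : 'M[R]_n) (v : 'cV[R]_n) : Prop :=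
  in_col X v /\ in_SK K U v.

Definition perp_Rsp (n p K : nat) (X : 'M[R]_(n, p)) (U : 'M[R]_n) (v : 'cV[R]_n) : Prop :=
  forall w : 'cV[R]_n, in_Rsp K X U w -> dotv w v = 0.

Definition constraints (n p K : nat) (X : 'M[R]_(n, p)) (U : 'M[R]_n)
  (beta theta : 'cV[R]_p) (alpha : 'cV[R]_n) : Prop :=
  [/\ in_Rsp K X U (X *m theta), perp_Rsp K X U (X *m beta),
      in_SK K U alpha & perp_Rsp K X U alpha].
End Defs.

(* Main.v *)
Require Import Defs.
From HB Require Import structures.
From mathcomp Require Import all_boot all_order all_algebra.
From mathcomp Require Import reals.
Import Order.TTheory GRing.Theory Num.Theory.
Local Open Scope ring_scope.

Section Helpers.
Variable R : realType.

Lemma dotvDr n (w u v : 'cV[R]_n) : dotv w (u + v) = dotv w u + dotv w v.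
Proof. by rewrite /dotv mulmxDr mxE. Qed.

Lemma dotvNr n (w u : 'cV[R]_n) : dotv w (- u) = - dotv w u.
Proof. by rewrite /dotv mulmxN mxE. Qed.

Lemma dotv_self0 n (v : 'cV[R]_n) : dotv v v = 0 -> v = 0.
Proof.
rewrite /dotv mxE => H.
have H2 : forall i, true -> 0 <= v^T 0 i * v i 0.
  by move=> i _; rewrite mxE -expr2 sqr_ge0.
apply/matrixP => i j; rewrite (ord1 j) mxE; move: i.
move=> i; have := psumr_eq0P H2 H (i:=i) isT; rewrite mxE -expr2 => /eqP.
by rewrite sqrf_eq0 => /eqP.
Qed.

Lemma in_Rsp_sub n p K (X : 'M[R]_(n, p)) U u v :
  in_Rsp K X U u -> in_Rsp K X U v -> in_Rsp K X U (u - v).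
Proof.
move=> [[b1 ->] [c1 [Hc1 E1]]] [[b2 ->] [c2 [Hc2 E2]]]; split.
  by exists (b1 - b2); rewrite mulmxBr.
exists (c1 - c2); split.
  by move=> j Hj; rewrite !mxE (Hc1 _ Hj) (Hc2 _ Hj) subr0.
by rewrite mulmxBr -E1 -E2.
Qed.

Lemma in_SK_sub n K (U : 'M[R]_n) u v :
  in_SK K U u -> in_SK K U v -> in_SK K U (u - v).
Proof.
move=> [c1 [Hc1 E1]] [c2 [Hc2 E2]].
exists (c1 - c2); split.
  by move=> j Hj; rewrite !mxE (Hc1 _ Hj) (Hc2 _ Hj) subr0.
by rewrite mulmxBr -E1 -E2.
Qed.

Lemma perp_sub n p K (X : 'M[R]_(n, p)) U u v :
  perp_Rsp K X U u -> perp_Rsp K X U v -> perp_Rsp K X U (u - v).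
Proof. by move=> Hu Hv w Hw; rewrite dotvDr dotvNr Hu // Hv // subrr. Qed.

End Helpers.

Theorem proposition1 (R : realType) (n p K : nat) (X : 'M[R]_(n, p))
  (P U : 'M[R]_n) (d : 'rV[R]_n)
  (beta theta beta' theta' : 'cV[R]_p) (alpha alpha' : 'cV[R]_n) :
  \rank X = p ->
  P^T = P ->
  ordered_spectral_decomp P U d ->
  X *m beta + X *m theta + alpha = X *m beta' + X *m theta' + alpha' ->
  constraints K X U beta theta alpha ->
  constraints K X U beta' theta' alpha' ->
  [/\ beta = beta', theta = theta' & alpha = alpha'].
Proof.
move=> rk _ _ H [T1 B1 A1 A1'] [T2 B2 A2 A2'].
set db := beta - beta'; set dt := theta - theta'; set da := alpha - alpha'.
have E : X *m db + X *m dt + da = 0.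
  have subDD : forall a a' b b' : 'cV[R]_n, (a - a') + (b - b') = (a + b) - (a' + b').
    by move=> a a' b b'; rewrite addrACA opprD.
  rewrite /db /dt /da !mulmxBr !subDD H subrr //.
have Rt : in_Rsp K X U (X *m dt) by rewrite /dt mulmxBr; exact: in_Rsp_sub.
have Pb : perp_Rsp K X U (X *m db) by rewrite /db mulmxBr; exact: perp_sub.
have Pa : perp_Rsp K X U da by exact: perp_sub.
have Sa : in_SK K U da by exact: in_SK_sub.
have Ea : da = X *m (- (db + dt)).
  by rewrite mulmxN mulmxDr; apply/eqP; rewrite -addr_eq0 addrC E.
have da0 : da = 0.
  apply: dotv_self0; apply: Pa; split => //; by exists (- (db + dt)).
have E' := E; rewrite da0 addr0 in E'.
have E2 : X *m dt = - (X *m db) by apply/eqP; rewrite -addr_eq0 addrC E'.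
have dt0 : X *m dt = 0.
  apply: dotv_self0; rewrite {2}E2 dotvNr Pb // oppr0 //.
have db0 : X *m db = 0 by rewrite -[X *m db]opprK -E2 dt0 oppr0.
have inj : forall b : 'cV[R]_p, X *m b = 0 -> b = 0.
  move=> b Hb.
  have rf : row_free X^T by rewrite /row_free mxrank_tr rk.
  apply: trmx_inj; rewrite trmx0; apply/eqP.
  by rewrite -(mulmx_free_eq0 _ rf) -trmx_mul Hb trmx0.
split.
- by apply/eqP; rewrite -subr_eq0; apply/eqP; exact: inj.
- by apply/eqP; rewrite -subr_eq0; apply/eqP; exact: inj.
- by apply/eqP; rewrite -subr_eq0; apply/eqP.
Qed.
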